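(* Suppose that $\|\tilde{\mu}_{m}-\mu\|_\infty=\mathcal{O}_{\mathrm{P}}(a_m)$ and $\|\tilde{\pi}_{m}-\pi\|_\infty=\mathcal{O}_{\mathrm{P}}(a_m)$ for sufficiently large $m$, where $\{a_m\}$ is a deterministic sequence with $a_m\to 0$. Suppose in addition that, for sufficiently large $m$ and conditionally on $\tilde{\mu}_{m}(\cdot)$, the joint density $b_m(x,u)$ of $(\mu(Z),\eta_m(Z))$, where $\eta_m=a_m^{-1}(\tilde{\mu}_{m}-\mu)$, and its partial derivatives $\partial_x b_m(x,u)$, $\partial_x^2 b_m(x,u)$ exist for all $x,u$ and there are non-negative functions $\bar b_{m,i}(u)$, $i=0,1,2$, with $b_m(x,u)\le \bar b_{m,0}(u)$, $|\partial_x b_m(x,u)|\le \bar b_{m,1}(u)$, $|\partial_x^2 b_m(x,u)|\le \bar b_{m,2}(u)$ for all $x,u$ and $\sup_m\int_{\mathbb{R}}|u|^r\bar b_{m,i}(u)\,du<\infty$ for $r=0,1,2,3$ and $i=0,1,2$. Suppose also that $f_\mu(q)>0$. Then $\mathcal{F}_q[\tilde{\mu}_{m}]-\mathcal{F}_q[\mu]=\mathcal{O}_{\mathrm{P}}(a_m)$.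
   Context: $Z$ denotes the risk factors, $\mu(z)=\mathrm{E}[X\mid Z=z]$, $\pi(z)=\mathrm{E}[Y\mid Z=z]$, and $\tilde{\mu}_{m},\tilde{\pi}_{m}$ are first-stage fitted approximations from $m$ outer-level scenarios. $\|\cdot\|_\infty$ is the essential supremum norm. $q$ is the $\alpha$-VaR of $\mu(Z)$ and $f_\mu$ the density of $\mu(Z)$. For a function $g$, the functional $\mathcal{F}_x[g]$ is the distribution function of $g(Z)$ at $x$, conditional on the fitted functions: $\mathcal{F}_x[g]=\mathrm{Pr}_m\{g(Z)\le x\}$; thus $\mathcal{F}_q[\mu]=\Pr\{\mu(Z)\le q\}$ and $\mathcal{F}_q[\tilde{\mu}_{m}]=\mathrm{Pr}_m\{\tilde{\mu}_{m}(Z)\le q\}$. *)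

(* Defs.v *)
From HB Require Import structures.
From mathcomp Require Import all_boot all_order all_algebra.
From mathcomp Require Import all_classical all_reals all_analysis ess_sup_inf.
Set Implicit Arguments. Unset Strict Implicit. Unset Printing Implicit Defensive.
Import Order.TTheory GRing.Theory Num.Theory.
Import numFieldNormedType.Exports.
Local Open Scope classical_set_scope.
Local Open Scope ring_scope.

Section defs.
Context {R : realType}.

(* Big-O in probability (outer-probability version, so that no measurability
   of the events is presupposed): X_m = O_P(a_m) iff for every eps > 0 there
   are M > 0 and N such that for all m >= N, the event {|X_m| > M a_m} is
   contained in a measurable event of probability < eps. *)
Definition OPe {d} {Om : measurableType d} (P : probability Om R)
  (X : nat -> Om -> \bar R) (a : nat -> R) : Prop :=
  forall eps : R, 0 < eps -> exists M : R, 0 < M /\ exists N : nat,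
    forall m, (N <= m)%N -> exists A : set Om, measurable A /\
      [set w | ((M * a m)%:E < `|X m w|)%E] `<=` A /\ (P A < eps%:E)%E.

Definition OP {d} {Om : measurableType d} (P : probability Om R)
  (X : nat -> Om -> R) (a : nat -> R) : Prop :=
  OPe P (fun m w => (X m w)%:E) a.

Definition esssup_norm {d} {T : measurableType d} (PZ : probability T R)
  (g : T -> R) : \bar R := ess_sup PZ (fun z => (`|g z|)%:E).

Definition distF {d} {T : measurableType d} (PZ : probability T R)
  (x : R) (g : T -> R) : R := fine (PZ [set z | g z <= x]).

Definition VaR {d} {T : measurableType d} (PZ : probability T R)
  (X : T -> R) (alpha : R) : R :=
  inf [set x : R | (alpha%:E <= PZ [set z | (X z <= x)%R])%E].

Definition is_density {d} {T : measurableType d} (PZ : probability T R)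
  (X : T -> R) (f : R -> R) : Prop :=
  (forall x, 0 <= f x) /\ measurable_fun setT f /\
  forall A : set R, measurable A ->
    PZ (X @^-1` A) = (\int[@lebesgue_measure R]_(x in A) (f x)%:E)%E.

Definition is_joint_density {d} {T : measurableType d} (PZ : probability T R)
  (X Y : T -> R) (b : R -> R -> R) : Prop :=
  (forall x u, 0 <= b x u) /\
  measurable_fun (@setT (R * R)%type) (fun p => b p.1 p.2) /\
  forall A : set (R * R)%type, measurable A ->
    PZ [set z | A (X z, Y z)] =
    (\int[(@lebesgue_measure R \x @lebesgue_measure R)%E]_(p in A) (b p.1 p.2)%:E)%E.

Definition dx (b : R -> R -> R) (x u : R) : R := derive1 (fun y => b y u) x.
Definition dx2 (b : R -> R -> R) (x u : R) : R := derive1 (fun y => dx b y u) x.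

End defs.

(* Main.v *)
Require Import Defs.
From HB Require Import structures.
From mathcomp Require Import all_boot all_order all_algebra.
From mathcomp Require Import all_classical all_reals all_analysis ess_sup_inf.
From mathcomp Require Import measurable_realfun.
From mathcomp Require Import ring lra.
Import Order.TTheory GRing.Theory Num.Theory.
Import numFieldNormedType.Exports.
Local Open Scope classical_set_scope.
Local Open Scope ring_scope.

Lemma le0_measurable d (T : measurableType d) (R : realType) (f : T -> R) :
  measurable_fun setT f -> measurable [set z | f z <= 0].
Proof.
move=> mf.
suff -> : [set z | f z <= 0] = f @^-1` `]-oo, 0] by rewrite -[X in measurable X]setTI; exact: mf.
by apply/seteqP; split => z /=; rewrite in_itv /=.
Qed.

Lemma key (R : realType) d (T : measurableType d) (PZ : probability T R)
  (X Y : T -> R) (bj : R -> R -> R) (bb : R -> R) (c q C : R) :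
  0 < c -> is_joint_density PZ X Y bj -> (forall x u, bj x u <= bb u) ->
  (forall u, 0 <= bb u) -> measurable_fun setT bb ->
  (\int[@lebesgue_measure R]_(u in setT) (`|u| * bb u)%:E <= C%:E)%E ->
  (PZ [set z | (`|X z - q| <= c * `|Y z|)%R] <= (2 * c * C)%:E)%E.
Proof.
move=> c0 [b0 [mb hP]] hb bb0 mbb hC.
set D := [set p : R * R | `|p.1 - q| - c * `|p.2| <= 0].
have mD : measurable D.
  apply: le0_measurable.
  apply: measurable_funB.
    exact: measurableT_comp (@normr_measurable _ _) (measurable_funB measurable_fst (measurable_cst _)).
  exact: measurable_funM (measurable_cst _) (measurableT_comp (@normr_measurable _ _) measurable_snd).
have -> : [set z | `|X z - q| <= c * `|Y z|] = [set z | D (X z, Y z)].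
  by apply/seteqP; split=> z; rewrite /D /= subr_le0.
rewrite hP //.
have mbs : measurable_fun setT (fun p : R * R => (bb p.2)%:E).
  exact: measurableT_comp (measurableT_comp mbb measurable_snd).
apply: (@le_trans _ _ (\int[(@lebesgue_measure R \x @lebesgue_measure R)%E]_(p in D) (bb p.2)%:E)%E).
  apply: ge0_le_integral => //.
  - by move=> p _; rewrite lee_fin.
  - move=> _ Y1 mY; apply: measurableI => //; rewrite -[X in measurable X]setTI; have h := (measurableT_comp (@EFin_measurable R setT) mb) measurableT Y1 mY; exact h.
  - move=> _ Y1 mY; apply: measurableI => //; rewrite -[X in measurable X]setTI; have h := mbs measurableT Y1 mY; exact h.
  - by move=> p _; rewrite lee_fin.
rewrite integral_mkcond fubini_tonelli2 /fubini_G; last 2 first.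
  - by apply/(measurable_restrictT _ mD); exact: (measurable_funS measurableT) mbs.
  - by move=> p; rewrite /patch; case: ifP => // _; rewrite lee_fin.
have inner : forall u : R,
  (\int[@lebesgue_measure R]_x ((fun p : R * R => (bb p.2)%:E) \_ D) (x, u))%E =
  ((2 * c)%:E * (`|u| * bb u)%:E)%E.
  move=> u.
  set I := `[q - c * `|u|, q + c * `|u|]%classic.
  have mI : measurable I by exact: measurable_itv.
  transitivity (\int[@lebesgue_measure R]_(x in I) (cst (bb u)%:E) x)%E.
    rewrite [in RHS]integral_mkcond; apply: eq_integral => x _.
    rewrite /patch.
    have -> : ((x, u) \in D) = (x \in I).
      apply/idP/idP => /set_mem H; apply/mem_set.
        by move: H; rewrite /D /= subr_le0 ler_distl => /andP[h1 h2]; rewrite /I /= in_itv /= h1 h2.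
      by move: H; rewrite /I /= in_itv /= => /andP[h1 h2]; rewrite /D /= subr_le0 ler_distl h1 h2.
    by [].
  rewrite integral_cst //.
  rewrite [X in (_ * X)%E = _](_ : _ = @lebesgue_measure R I) // /I lebesgue_measure_itv /=.
  case: ifPn => [hlt|hnlt].
    rewrite -EFinD -EFinM; congr (_%:E); ring.
  have u0 : `|u| = 0.
    apply/eqP; rewrite eq_le normr_ge0 andbT.
    move: hnlt; rewrite lte_fin -leNgt => h.
    have : c * `|u| <= 0 by lra.
    by rewrite pmulr_rle0.
  by rewrite u0 mul0r -EFinM mulr0 -EFinM mulr0.
under eq_integral => u _ do rewrite inner.
have mf : measurable_fun setT (fun u : R => (`|u| * bb u)%:E).
  exact: measurableT_comp (measurable_funM (@normr_measurable _ _) mbb).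
rewrite ge0_integralZl //; last 2 first.
  - by move=> u _; rewrite lee_fin mulr_ge0.
  - by rewrite lee_fin mulr_ge0 // ltW.
rewrite [X in (_ <= X)%E]EFinM; apply: lee_wpmul2l => //.
by rewrite lee_fin mulr_ge0 // ltW.
Qed.

Lemma le_measurable d (T : measurableType d) (R : realType) (f g : T -> R) :
  measurable_fun setT f -> measurable_fun setT g -> measurable [set z | f z <= g z].
Proof.
move=> mf mg.
have -> : [set z | f z <= g z] = [set z | (f \- g) z <= 0].
  by apply/seteqP; split => z /=; rewrite subr_le0.
apply: le0_measurable; exact: measurable_funB.
Qed.

Lemma bound_diff (R : realType) d (T : measurableType d) (PZ : probability T R)
  (f g : T -> R) (q s : R) :
  measurable_fun setT f -> measurable_fun setT g ->
  (PZ [set z | (`|g z - q| <= `|f z - g z|)%R] <= s%:E)%E ->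
  `|distF PZ q f - distF PZ q g| <= s.
Proof.
move=> mf mg hS.
set E1 := [set z | f z <= q]; set E0 := [set z | g z <= q].
set S := [set z | `|g z - q| <= `|f z - g z|].
have mE1 : measurable E1 by apply: le_measurable.
have mE0 : measurable E0 by apply: le_measurable.
have mS : measurable S.
  apply: le_measurable.
    exact: measurableT_comp (@normr_measurable _ _) (measurable_funB mg (measurable_cst _)).
  exact: measurableT_comp (@normr_measurable _ _) (measurable_funB mf mg).
have h1 : (PZ E1 <= PZ E0 + PZ S)%E.
  apply: le_trans (measureU2 _ mE0 mS).
  apply: le_measure; rewrite ?inE //; try exact: measurableU.
  move=> z; rewrite /E1 /E0 /S /= => hz.
  have [h|h] := leP (g z) q; first by left.
  right; rewrite (ger0_norm (ltW _)) ?subr_gt0 // (ler0_norm _); first lra.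
  lra.
have h0 : (PZ E0 <= PZ E1 + PZ S)%E.
  apply: le_trans (measureU2 _ mE1 mS).
  apply: le_measure; rewrite ?inE //; try exact: measurableU.
  move=> z; rewrite /E1 /E0 /S /= => hz.
  have [h|h] := leP (f z) q; first by left.
  right; rewrite (ler0_norm _) ?subr_le0 // (ger0_norm (ltW _)) ?subr_gt0 //; lra.
rewrite /distF -/E1 -/E0.
have f1 := fin_num_measure PZ _ mE1.
have f0 := fin_num_measure PZ _ mE0.
have fS := fin_num_measure PZ _ mS.
move: h1 h0 hS; rewrite -(fineK f1) -(fineK f0) -(fineK fS) /= -!EFinD !lee_fin => h1 h0 hS.
rewrite ler_norml; apply/andP; split; lra.
Qed.

Theorem lemma2 (R : realType)
  (d1 : measure_display) (Om : measurableType d1) (P : probability Om R)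
  (d2 : measure_display) (T : measurableType d2) (PZ : probability T R)
  (mu pi : T -> R) (mut pit : nat -> Om -> T -> R) (a : nat -> R)
  (alpha q : R) (fmu : R -> R)
  (b : nat -> Om -> R -> R -> R) :
  measurable_fun setT mu -> measurable_fun setT pi ->
  (forall m w, measurable_fun setT (mut m w)) ->
  (forall m w, measurable_fun setT (pit m w)) ->
  (forall m, 0 < a m) -> a @ \oo --> 0 ->
  OPe P (fun m w => esssup_norm PZ (fun z => mut m w z - mu z)) a ->
  OPe P (fun m w => esssup_norm PZ (fun z => pit m w z - pi z)) a ->
  (exists N : nat, forall m, (N <= m)%N -> forall w : Om,
     is_joint_density PZ mu (fun z => (a m)^-1 * (mut m w z - mu z)) (b m w) /\
     (forall x u, derivable (fun y => b m w y u) x 1) /\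
     (forall x u, derivable (fun y => dx (b m w) y u) x 1)) ->
  (exists N : nat, exists bbar : nat -> Om -> nat -> R -> R, exists C : R,
     forall m, (N <= m)%N -> forall w : Om,
       (forall i u, 0 <= bbar m w i u) /\
       (forall i, measurable_fun setT (bbar m w i)) /\
       (forall x u, b m w x u <= bbar m w 0%N u) /\
       (forall x u, `|dx (b m w) x u| <= bbar m w 1%N u) /\
       (forall x u, `|dx2 (b m w) x u| <= bbar m w 2%N u) /\
       (forall (r i : nat), (r <= 3)%N -> (i <= 2)%N ->
          (\int[@lebesgue_measure R]_(u in setT) (`|u| ^+ r * bbar m w i u)%:E
             <= C%:E)%E)) ->
  0 < alpha < 1 -> q = VaR PZ mu alpha ->
  is_density PZ mu fmu -> 0 < fmu q ->
  OP P (fun m w => distF PZ q (mut m w) - distF PZ q mu) a.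
Proof.
move=> hmu hpi hmut hpit ha ha0 _ _ [N1 hjd] [N2 [bbar [C hbb]]] _ _ _ _.
rewrite /OP /OPe => eps eps0.
set K := Num.max C 0.
have K0 : 0 <= K by rewrite le_max lexx orbT.
have CK : C <= K by rewrite le_max lexx.
exists (2 * K + 1); split; first lra.
exists (maxn N1 N2) => m hm.
exists set0; split; first exact: measurable0.
split; last by rewrite measure0.
move=> w /=.
have hm1 : (N1 <= m)%N by apply: leq_trans hm; apply: leq_maxl.
have hm2 : (N2 <= m)%N by apply: leq_trans hm; apply: leq_maxr.
have [hj _] := hjd m hm1 w.
have [bb0 [mbb [hb [_ [_ hint]]]]] := hbb m hm2 w.
have am := ha m.
have ai : 0 <= (a m)^-1 by rewrite invr_ge0 ltW.
have hC : (\int[@lebesgue_measure R]_(u in setT) (`|u| * bbar m w 0%N u)%:E <= C%:E)%E.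
  by have := hint 1%N 0%N erefl erefl; under eq_integral do rewrite expr1.
have hk := @key R _ T PZ mu _ (b m w) (bbar m w 0%N) (a m) q C am hj hb (bb0 0%N) (mbb 0%N) hC.
have hS : (PZ [set z | (`|mu z - q| <= `|mut m w z - mu z|)%R] <= (2 * a m * C)%:E)%E.
  apply: le_trans hk; rewrite le_eqVlt; apply/orP; left; apply/eqP; congr (PZ _).
  apply/seteqP; split => z /=.
    by rewrite normrM (ger0_norm ai) mulrA divff ?mul1r // gt_eqF.
  by rewrite normrM (ger0_norm ai) mulrA divff ?mul1r // gt_eqF.
have hd := @bound_diff R _ T PZ (mut m w) mu q _ (hmut m w) hmu hS.
have hK : (a m * C <= a m * K)%R by rewrite ler_wpM2l // ltW.
move=> hw; exfalso; move: hw; rewrite lte_fin => hw.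
lra.
Qed.
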